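(* Let $p\geq 3$ be odd and consider a chiral conformal field theory with Virasoro symmetry at central charge $c_{2,p}=1-3(p-2)^2/p$ whose vacuum is invariant under $L_{-1},L_0,L_1$. Suppose it contains two fields $\lambda_1,\lambda_2$ (the logarithmic partner fields of two rank-2 staggered modules sharing the highest weight submodule $\mathcal{I}_{1,p-1}$), both of conformal weight $1$, with operator product expansions $$T(z_1)\lambda_i(z_2) = \frac{\beta_i\,\phi(z_2)}{z_{12}^3} + \frac{\lambda_i(z_2)+\chi(z_2)}{z_{12}^2} + \frac{\partial\lambda_i(z_2)}{z_{12}} + \ldots,\qquad i=1,2,$$ where $\phi=\phi_{1,p-1}$ is the primary field of dimension $0$ with $\langle\phi(z_1)\phi(z_2)\rangle=1$ and $\chi=\partial\phi$. Then the two-point function $\langle\lambda_1(z_1)\lambda_2(z_2)\rangle$ can satisfy the Ward identities of global conformal invariance (under $L_{-1},L_0,L_1$) only if $\beta_1=\beta_2$. In particular, since the staggered modules $\mathcal{S}_{1,p+1}$ and $\mathcal{S}_{3,p-1}$ have logarithmic couplings $\beta_{1,p+1}=-\frac{p-2}{2}$ and $\beta_{3,p-1}=\frac{p-2}{p}$, which differ, these two staggered modules cannot both be present in the spectrum of such a theory.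
   Context: For $c=c_{2,p}$ and positive integers $r,s$, set $h_{r,s}=\frac{(pr-2s)^2-(p-2)^2}{8p}$; then $h_{1,p-1}=0$ and $h_{1,p+1}=h_{3,p-1}=1$. Let $\mathcal{I}_{r,s}$ denote the quotient of the Verma module of highest weight $h_{r,s}$ (highest weight state $|\phi_{r,s}\rangle$) by the Verma submodule generated by its singular vector at grade $rs$. In $\mathcal{I}_{1,p-1}$, $|\chi_{1,p-1}\rangle=L_{-1}|\phi_{1,p-1}\rangle$ is a non-vanishing singular vector of dimension $1$. A rank-2 staggered module $\mathcal{S}_{r,s}$ (here $(r,s)=(1,p+1)$ or $(3,p-1)$) is an indecomposable Virasoro module with highest weight submodule isomorphic to $\mathcal{I}_{1,p-1}$ and quotient by this submodule isomorphic to $\mathcal{I}_{r,s}$, generated by $|\phi_{1,p-1}\rangle$ and a state $|\lambda_{r,s}\rangle$ with $L_0|\lambda_{r,s}\rangle=|\lambda_{r,s}\rangle+|\chi_{1,p-1}\rangle$; its logarithmic coupling is $\beta_{r,s}=\langle\chi_{1,p-1}|\lambda_{r,s}\rangle$, with $L_1|\lambda_{r,s}\rangle=\beta_{r,s}|\phi_{1,p-1}\rangle$, for the inner product with $L_n^\dagger=L_{-n}$ normalised so that $\langle\phi_{1,p-1}|\phi_{1,p-1}\rangle=1$. Global conformal invariance means correlators are annihilated by the differential operators induced (via the OPEs with $T$) by $L_{-1}$, $L_0$ and $L_1$. The notation is $z_{12}=z_1-z_2$. *)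

(* Defs.v *)
From Stdlib Require Import Reals.
From Coquelicot Require Import Coquelicot.

Open Scope C_scope.

(* The four fields whose two-point functions enter the argument:
   Phi = phi_{1,p-1} (primary, weight h_{1,p-1} = 0),
   Chi = chi_{1,p-1} = d phi = L_{-1} phi (weight 1),
   Lam1, Lam2 = logarithmic partner fields lambda_1, lambda_2 (weight 1). *)
Inductive fld := Phi | Chi | Lam1 | Lam2.

Definition fsum (g : fld -> C) : C := g Phi + g Chi + g Lam1 + g Lam2.

(* Action of L_0 on the fields, read off from the OPEs with T:
   [L0c A X] is the coefficient of X in L_0 A.
   L_0 phi = 0, L_0 chi = chi, L_0 lambda_i = lambda_i + chi. *)
Definition L0c (A X : fld) : C :=
  match A, X with
  | Chi, Chi => 1
  | Lam1, Lam1 => 1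
  | Lam1, Chi => 1
  | Lam2, Lam2 => 1
  | Lam2, Chi => 1
  | _, _ => 0
  end.

(* Action of L_1 on the fields: L_1 phi = 0, L_1 chi = L_1 L_{-1} phi
   = 2 L_0 phi = 0, L_1 lambda_i = beta_i phi. *)
Definition L1c (b1 b2 : C) (A X : fld) : C :=
  match A, X with
  | Lam1, Phi => b1
  | Lam2, Phi => b2
  | _, _ => 0
  end.

(* A two-point function family: [corr A B z1 z2] = < A(z1) B(z2) >,
   with partial derivatives [d1 A B z1 z2] (in z1) and [d2 A B z1 z2]
   (in z2).  The global Ward identities: the correlator is annihilated by
   the differential operators induced by L_n, n = -1, 0, 1, namely
   sum_i [ z_i^{n+1} d_i + (n+1) z_i^n L_0^{(i)} + n(n+1)/2 z_i^{n-1} L_1^{(i)} ]. *)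
Definition ward_m1 (d1 d2 : fld -> fld -> C -> C -> C)
  (A B : fld) (z1 z2 : C) : Prop :=
  d1 A B z1 z2 + d2 A B z1 z2 = 0.

Definition ward_0 (corr d1 d2 : fld -> fld -> C -> C -> C)
  (A B : fld) (z1 z2 : C) : Prop :=
  z1 * d1 A B z1 z2 + z2 * d2 A B z1 z2
  + fsum (fun X => L0c A X * corr X B z1 z2)
  + fsum (fun X => L0c B X * corr A X z1 z2) = 0.

Definition ward_1 (b1 b2 : C) (corr d1 d2 : fld -> fld -> C -> C -> C)
  (A B : fld) (z1 z2 : C) : Prop :=
  z1 * z1 * d1 A B z1 z2 + z2 * z2 * d2 A B z1 z2
  + 2 * z1 * fsum (fun X => L0c A X * corr X B z1 z2)
  + 2 * z2 * fsum (fun X => L0c B X * corr A X z1 z2)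
  + fsum (fun X => L1c b1 b2 A X * corr X B z1 z2)
  + fsum (fun X => L1c b1 b2 B X * corr A X z1 z2) = 0.

Definition open2 (D : C -> C -> Prop) : Prop :=
  forall z1 z2, D z1 z2 -> exists eps : R, (0 < eps)%R /\
    forall w1 w2, (Cmod (w1 - z1) < eps)%R -> (Cmod (w2 - z2) < eps)%R ->
      D w1 w2.

Definition c2p (p : nat) : R := 1 - 3 * (INR p - 2) ^ 2 / INR p.
Definition hrs (p r s : nat) : R :=
  ((INR p * INR r - 2 * INR s) ^ 2 - (INR p - 2) ^ 2) / (8 * INR p).

Definition beta_1_pp1 (p : nat) : C := RtoC (- (INR p - 2) / 2).
Definition beta_3_pm1 (p : nat) : C := RtoC ((INR p - 2) / INR p).

(* Main.v *)
Require Import Defs.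
From Stdlib Require Import Reals Lra.
From Coquelicot Require Import Coquelicot.
Open Scope C_scope.

Lemma eq0' : forall x y : C, y = 0 -> x = y -> x = 0.
Proof. intros x y H1 H2. rewrite H2. exact H1. Qed.

Lemma solveC : forall w x y : C, w <> 0 -> w * x = y -> x = y / w.
Proof. intros w x y Hw H. subst y. field. exact Hw. Qed.

Lemma lincomb : forall x y l1 l2 : C, l1 = 0 -> l2 = 0 -> x = y + l1 + l2 -> x = y.
Proof. intros x y l1 l2 H1 H2 H. rewrite H, H1, H2. ring. Qed.

Lemma cancel0 : forall w x : C, w <> 0 -> w * x = 0 -> x = 0.
Proof. intros w x Hw H. apply solveC in H; auto. rewrite H. field. auto. Qed.

Lemma comb4 : forall x L1 L2 L3 L4 c1 c2 c3 c4 : C,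
  L1 = 0 -> L2 = 0 -> L3 = 0 -> L4 = 0 -> x = c1*L1 + c2*L2 + c3*L3 + c4*L4 -> x = 0.
Proof. intros x L1 L2 L3 L4 c1 c2 c3 c4 H H0 H1 H2 H3. rewrite H3, H, H0, H1, H2. ring. Qed.

Lemma comb4' : forall x y L1 L2 L3 L4 c1 c2 c3 c4 : C,
  L1 = 0 -> L2 = 0 -> L3 = 0 -> L4 = 0 -> x - y = c1*L1 + c2*L2 + c3*L3 + c4*L4 -> x = y.
Proof. intros x y L1 L2 L3 L4 c1 c2 c3 c4 H H0 H1 H2 H3. rewrite H, H0, H1, H2 in H3.
  replace x with (x - y + y) by ring. rewrite H3. ring. Qed.

Lemma solve0 : forall w x y : C, w <> 0 -> w * x - y = 0 -> x = y / w.
Proof. intros w x y H H0. apply solveC; auto. replace (w*x) with (w*x - y + y) by ring.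
  rewrite H0. ring. Qed.

Theorem mainTheorem3 (p : nat) (hp3 : (3 <= p)%nat) (hodd : Nat.odd p = true)
  (b1 b2 : C) (D : C -> C -> Prop)
  (corr d1 d2 : fld -> fld -> C -> C -> C)
  (HDopen : open2 D) (HDne : exists z1 z2, D z1 z2)
  (HDoff : forall z1 z2, D z1 z2 -> z1 <> z2)
  (Hd1 : forall A B z1 z2, D z1 z2 ->
     @is_derive C_AbsRing C_NormedModule (fun w : C => corr A B w z2) z1 (d1 A B z1 z2))
  (Hd2 : forall A B z1 z2, D z1 z2 ->
     @is_derive C_AbsRing C_NormedModule (fun w : C => corr A B z1 w) z2 (d2 A B z1 z2))
  (Hphiphi : forall z1 z2, D z1 z2 -> corr Phi Phi z1 z2 = 1)
  (HchiL : forall B z1 z2, D z1 z2 -> corr Chi B z1 z2 = d1 Phi B z1 z2)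
  (HchiR : forall A z1 z2, D z1 z2 -> corr A Chi z1 z2 = d2 A Phi z1 z2)
  (Hwm1 : forall A B z1 z2, D z1 z2 -> ward_m1 d1 d2 A B z1 z2)
  (Hw0 : forall A B z1 z2, D z1 z2 -> ward_0 corr d1 d2 A B z1 z2)
  (Hw1 : forall A B z1 z2, D z1 z2 -> ward_1 b1 b2 corr d1 d2 A B z1 z2) :
  b1 = b2 /\
  ~ ((b1 = beta_1_pp1 p /\ b2 = beta_3_pm1 p) \/
     (b1 = beta_3_pm1 p /\ b2 = beta_1_pp1 p)).
Proof.
  assert (Heq : b1 = b2).
  { destruct HDne as [z1 [z2 hD]].
    assert (Hw : z1 - z2 <> 0).
    { intro E. apply (HDoff z1 z2 hD).
      replace z1 with (z1 - z2 + z2) by ring. rewrite E. ring. }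
    pose proof (Hphiphi z1 z2 hD) as PP.
    pose proof (HchiL Lam2 z1 z2 hD) as CL2.
    pose proof (HchiL Phi z1 z2 hD) as CP.
    pose proof (HchiR Lam1 z1 z2 hD) as RL1.
    pose proof (HchiR Phi z1 z2 hD) as RP.
    pose proof (Hwm1 Phi Phi z1 z2 hD) as M1.
    pose proof (Hw0 Phi Phi z1 z2 hD) as W0a.
    pose proof (Hwm1 Phi Lam2 z1 z2 hD) as M2.
    pose proof (Hw0 Phi Lam2 z1 z2 hD) as W02.
    pose proof (Hw1 Phi Lam2 z1 z2 hD) as W12.
    pose proof (Hwm1 Lam1 Phi z1 z2 hD) as M3.
    pose proof (Hw0 Lam1 Phi z1 z2 hD) as W03.
    pose proof (Hw1 Lam1 Phi z1 z2 hD) as W13.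
    pose proof (Hwm1 Lam1 Lam2 z1 z2 hD) as M4.
    pose proof (Hw0 Lam1 Lam2 z1 z2 hD) as W04.
    pose proof (Hw1 Lam1 Lam2 z1 z2 hD) as W14.
    unfold ward_m1, ward_0, ward_1, fsum in *; simpl in *.
    rewrite ?PP, ?CL2, ?CP, ?RL1, ?RP in *.
    clear Hwm1 Hw0 Hw1 Hd1 Hd2 Hphiphi HchiL HchiR HDoff HDopen.
    set (a1 := d1 Phi Phi z1 z2) in *.
    set (a2 := d2 Phi Phi z1 z2) in *.
    set (G := corr Phi Lam2 z1 z2) in *.
    set (e1 := d1 Phi Lam2 z1 z2) in *.
    set (e2 := d2 Phi Lam2 z1 z2) in *.
    set (K := corr Lam1 Phi z1 z2) in *.
    set (f1 := d1 Lam1 Phi z1 z2) in *.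
    set (f2 := d2 Lam1 Phi z1 z2) in *.
    set (H := corr Lam1 Lam2 z1 z2) in *.
    set (g1 := d1 Lam1 Lam2 z1 z2) in *.
    set (g2 := d2 Lam1 Lam2 z1 z2) in *.
    assert (Ha1 : a1 = 0).
    { apply (cancel0 (z1 - z2)); auto.
      apply (comb4 _ _ _ _ _ 1 (-z2) 0 0 W0a M1 M1 M1). ring. }
    assert (Ha2 : a2 = 0).
    { apply (comb4 _ _ _ _ _ 1 (-1) 0 0 M1 Ha1 M1 M1). ring. }
    assert (HG : G = b2 / (z1 - z2)).
    { apply solve0; auto.
      apply (comb4 _ _ _ _ _ (-1) (z1+z2) (-(z1*z2)) (-(z1-z2)) W12 W02 M2 Ha2). ring. }
    assert (He1 : e1 = (-G) / (z1 - z2)).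
    { apply solve0; auto.
      apply (comb4 _ _ _ _ _ 1 (-z2) (-1) 0 W02 M2 Ha2 M2). ring. }
    assert (HK : K = (-b1) / (z1 - z2)).
    { apply solve0; auto.
      apply (comb4 _ _ _ _ _ 1 (-(z1+z2)) (z1*z2) (-(z1-z2)) W13 W03 M3 Ha1). ring. }
    assert (Hf1 : f1 = (-K) / (z1 - z2)).
    { apply solve0; auto.
      apply (comb4 _ _ _ _ _ 1 (-z2) (-1) 0 W03 M3 Ha1 M3). ring. }
    assert (Hf2 : f2 = - f1).
    { apply (comb4' _ _ _ _ _ _ 1 0 0 0 M3 M3 M3 M3). ring. }
    assert (HE : (z1 - z2) * (e1 - f2) + b1 * G + b2 * K = 0).
    { apply (comb4 _ _ _ _ _ 1 (-(z1+z2)) (z1*z2) 0 W14 W04 M4 M4). ring. }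
    rewrite Hf2, Hf1, He1, HG, HK in HE.
    apply (comb4' _ _ _ _ _ _ (z1 - z2) 0 0 0 HE HE HE HE). field. auto. }
  split; [exact Heq|].
  assert (Hp : (3 <= INR p)%R) by (replace 3%R with (INR 3) by (simpl; ring); apply le_INR; exact hp3).
  assert (Hne : beta_1_pp1 p <> beta_3_pm1 p).
  { intro E. unfold beta_1_pp1, beta_3_pm1 in E.
    apply (f_equal fst) in E. simpl in E.
    assert (L : (- (INR p - 2) / 2 < 0)%R) by lra.
    assert (R0 : (0 < (INR p - 2) / INR p)%R).
    { apply Rdiv_lt_0_compat; lra. }
    lra. }
  intros [[E1 E2]|[E1 E2]]; apply Hne; congruence.
Qed.
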